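(* Suppose $p>1-1/e^2$ and fix $\epsilon'>0$. Then there is a constant $c_1=c_1(\epsilon')>0$ (independent of $n$) such that for every $n$ with $x_0(n)>\epsilon'$ we have $\varphi_n(x_0(n)-\epsilon')\ge c_1$.
   Context: Let $p\in(0,1)$ be constant, $q=1-p$, $b=1/q$, $\gamma=\gamma(n)=2\log_b n-2\log_b\log_b n-2\log_b 2$, $\Delta=\gamma-\lfloor\gamma\rfloor\in[0,1)$. Define $\varphi_n(x)=(1-\Delta+x)\log_b(1-\Delta+x)+(1-\Delta)(\Delta-x)/2$, and let $x_0=x_0(n)$ be the smallest nonnegative $x$ with $\varphi_n(x)\le0$ (well defined since $\varphi_n(\Delta)=0$, and $x_0\in[0,\Delta]$). *)

(* Defs.v *)
From Stdlib Require Import Reals.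
Open Scope R_scope.

Definition base (p : R) : R := / (1 - p).

Definition logb (p x : R) : R := ln x / ln (base p).

Definition gamma (p : R) (n : nat) : R :=
  2 * logb p (INR n) - 2 * logb p (logb p (INR n)) - 2 * logb p 2.

(* floor via Int_part (Int_part r = up r - 1 = floor r) *)
Definition Delta (p : R) (n : nat) : R :=
  gamma p n - IZR (Int_part (gamma p n)).

Definition phi (p : R) (n : nat) (x : R) : R :=
  let D := Delta p n in
  (1 - D + x) * logb p (1 - D + x) + (1 - D) * (D - x) / 2.

Definition is_x0 (p : R) (n : nat) (x : R) : Prop :=
  0 <= x /\ phi p n x <= 0 /\
  (forall y, 0 <= y -> phi p n y <= 0 -> x <= y).

(* Main.v *)
From Stdlib Require Import Reals Lra.
From Coquelicot Require Import Coquelicot.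
Require Import Defs.
Open Scope R_scope.

Lemma ln_le_m1 y : 0 < y -> ln y <= y - 1.
Proof. intros Hy. pose proof (exp_ineq1_le (ln y)). rewrite exp_ln in H; lra. Qed.

Lemma key a c : 0 < a -> a <= c -> c <= 1 ->
  (c-a)^2/4 <= a * ln a + c * ln c - 2 * ((a+c)/2 * ln ((a+c)/2)).
Proof.
intros Ha Hac Hc1.
set (G := fun x => x * ln x - 2 * ((a+x)/2 * ln ((a+x)/2)) - (x-a)^2/4).
set (dG := fun x => ln x - ln ((a+x)/2) - (x-a)/2).
assert (HD : forall x, a <= x -> is_derive G x (dG x)).
{ intros x Hx. unfold G, dG. auto_derive.
  repeat split; try lra. unfold Rdiv; field; lra. }
destruct (MVT_gen G a c dG) as [z [Hz Heq]].
- intros x Hx. apply HD. rewrite Rmin_left in Hx; lra.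
- intros x Hx. apply continuity_pt_filterlim. apply (ex_derive_continuous (K:=R_AbsRing) (V:=R_NormedModule)).
  eexists. apply HD. rewrite Rmin_left in Hx; lra.
- rewrite Rmin_left in Hz; [|lra]. rewrite Rmax_right in Hz; [|lra].
  assert (dG z >= 0).
  { unfold dG. set (m := (a+z)/2).
    assert (0 < m) by (unfold m; lra).
    pose proof (ln_le_m1 (m/z) ltac:(apply Rdiv_lt_0_compat; lra)).
    rewrite ln_div in H0 by lra.
    assert ((m/z - 1) = -(z-m)/z) by (field; lra).
    assert ((z-m)/z >= z - m).
    { unfold m. apply Rle_ge. apply Rmult_le_reg_r with z; [lra|].
      field_simplify; [|lra]. nra. }
    unfold m in *. lra. }
  assert (G a = -(a * ln a)).
  { unfold G. replace ((a+a)/2) with a by field. replace (a-a) with 0 by lra. simpl. lra. }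
  unfold G in Heq, H0. nra.
Qed.

Lemma phi_eq (p : R) (n : nat) (x : R) : let D := Delta p n in
  phi p n x = ((1 - D + x) * ln (1 - D + x)) / ln (Defs.base p) + (1 - D) * (1 - (1 - D + x)) / 2.
Proof. intros D. unfold phi, logb. fold D. unfold Rdiv. ring. Qed.

Theorem lemma5 (p : R) (hp0 : 0 < p) (hp1 : p < 1)
  (hp : p > 1 - / exp 2) (eps : R) (heps : eps > 0) :
  exists c1 : R, c1 > 0 /\
    forall (n : nat) (x0 : R), (2 <= n)%nat -> is_x0 p n x0 -> x0 > eps ->
      phi p n (x0 - eps) >= c1.
Proof.
  assert (HL : 0 < ln (Defs.base p)).
  { rewrite <- ln_1. apply ln_increasing; [lra|]. unfold Defs.base.
    rewrite <- Rinv_1. apply Rinv_lt_contravar; lra. }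
  set (L := ln (Defs.base p)) in *.
  exists (eps^2/(4*L)). split.
  { apply Rlt_gt. apply Rdiv_lt_0_compat; nra. }
  intros n x0 _ [h0 [hphi hmin]] hx.
  set (D := Delta p n).
  assert (HD : 0 <= D < 1).
  { unfold D, Delta. pose proof (base_Int_part (gamma p n)). lra. }
  assert (HxD : x0 <= D).
  { apply hmin; [lra|]. rewrite phi_eq. fold D. fold L.
    replace (1 - D + D) with 1 by ring. rewrite ln_1. lra. }
  assert (Hm : phi p n (x0 - eps/2) > 0).
  { destruct (Rle_or_lt (phi p n (x0 - eps/2)) 0) as [H|H]; [|lra].
    assert (x0 <= x0 - eps/2) by (apply hmin; lra). lra. }
  pose proof (key (1 - D + (x0 - eps)) (1 - D + x0) ltac:(lra) ltac:(lra) ltac:(lra)) as K.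
  replace ((1 - D + (x0 - eps) + (1 - D + x0)) / 2) with (1 - D + (x0 - eps/2)) in K by field.
  replace (1 - D + x0 - (1 - D + (x0 - eps))) with eps in K by ring.
  rewrite phi_eq in Hm, hphi |- *. fold D L in Hm, hphi |- *.
  set (A := (1 - D + (x0 - eps)) * ln (1 - D + (x0 - eps))) in *.
  set (M := (1 - D + (x0 - eps/2)) * ln (1 - D + (x0 - eps/2))) in *.
  set (C := (1 - D + x0) * ln (1 - D + x0)) in *.
  assert (eps^2/4/L <= (A + C - 2*M)/L).
  { unfold Rdiv. apply Rmult_le_compat_r; [apply Rlt_le, Rinv_0_lt_compat; lra|]. lra. }
  replace (eps^2/(4*L)) with (eps^2/4/L) by (field; lra).
  replace ((A + C - 2*M)/L) with (A/L + C/L - 2*(M/L)) in H by (field; lra).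
  lra.
Qed.
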